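(* Let $n\ge3$, $a_0\in\mathbb{R}$, $a\in\mathbb{R}^n$ with $a_0+a^\top x>0$ for all $x\in\{0,1\}^n$. Let $I=\{i,j\}\subseteq[n]$ with $i\ne j$. Then $\operatorname{conv}(\mathcal{G}_I)$ equals the set of all $(\rho,y,x_i,x_j)\in\mathbb{R}\times\mathbb{R}^n\times\mathbb{R}\times\mathbb{R}$ for which there exists $w=(w_{uv})_{\{u,v\}\in E(I)}$ such that: (a) for every $\{u,v\}\in E(I)$: $w_{uv}\ge0$, $y_u+y_v-w_{uv}\le\rho$, $w_{uv}\le y_u$, $w_{uv}\le y_v$; (b) for every $k\in[n]\setminus\{i,j\}$: $y_i+y_j+y_k-w_{ij}-w_{jk}-w_{ik}\le\rho$, $-y_i+w_{ij}+w_{ik}-w_{jk}\le0$, $-y_j+w_{ij}-w_{ik}+w_{jk}\le0$, $-y_k-w_{ij}+w_{ik}+w_{jk}\le0$; (c) $\rho\ge0$ and $a_0\rho+a^\top y=1$; (d) $x_u=(a_0+a_u)y_u+\sum_{v\in[n]\setminus\{u\}}a_vw_{uv}$ for $u\in\{i,j\}$. Consequently the 2-term relaxation of the linear fractional polytope is the intersection over all such $I$ of these sets (each extended to the space of $(\rho,y,x)$).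
   Context: For $I\subseteq[n]$, $\mathcal{G}_I=\bigl\{\bigl(\frac{1}{a_0+a^\top x},\frac{x}{a_0+a^\top x},(x_i)_{i\in I}\bigr)\bigm| x\in\{0,1\}^n\bigr\}$. The linear fractional polytope is $\operatorname{conv}(\mathcal{G}_{[n]})$, and its $k$-term relaxation is $\bigcap_{I\subseteq[n],|I|=k}\operatorname{conv}(\mathcal{G}_I)$, where each $\operatorname{conv}(\mathcal{G}_I)$ is extended to the space of $(\rho,y,x)\in\mathbb{R}\times\mathbb{R}^n\times\mathbb{R}^n$ by leaving the coordinates $x_l$, $l\notin I$, free. $E(I)$ is the set of unordered pairs $\{u,v\}$ of distinct elements of $[n]$ with $u\in I$ or $v\in I$; $w_{uv}=w_{vu}$ denotes the variable of the pair $\{u,v\}$. *)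

(* Defs.v *)
From mathcomp Require Import all_boot all_order all_algebra.
From mathcomp Require Import reals.
Import Order.TTheory GRing.Theory Num.Theory.
Local Open Scope ring_scope.

Definition conv {R : numDomainType} {V : lmodType R} (S : V -> Prop) (p : V) : Prop :=
  exists (m : nat) (lam : 'I_m -> R) (v : 'I_m -> V),
    (forall k, 0 <= lam k) /\ \sum_(k < m) lam k = 1 /\
    (forall k, S (v k)) /\ p = \sum_(k < m) lam k *: v k.

Notation subI I := {u : 'I__ | u \in I}.

Definition denom {R : realType} {n : nat} (a0 : R) (a : 'rV[R]_n)
  (x : {ffun 'I_n -> bool}) : R :=
  a0 + \sum_(k < n) a 0 k * (x k)%:R.

Definition Gpt {R : realType} {n : nat} (a0 : R) (a : 'rV[R]_n) (I : {set 'I_n})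
  (x : {ffun 'I_n -> bool}) : R^o * 'rV[R]_n * {ffun subI I -> R^o} :=
  ((denom a0 a x)^-1, \row_(k < n) ((x k)%:R / denom a0 a x),
   [ffun s : subI I => (x (val s))%:R]).

Definition G {R : realType} {n : nat} (a0 : R) (a : 'rV[R]_n) (I : {set 'I_n})
  (p : R^o * 'rV[R]_n * {ffun subI I -> R^o}) : Prop :=
  exists x : {ffun 'I_n -> bool}, p = Gpt a0 a I x.

(* k-term relaxation: (rho,y,x) lies in conv(G_I), extended by leaving
   x_l (l ∉ I) free, for every I with |I| = k. *)
Definition relax_k {R : realType} {n : nat} (a0 : R) (a : 'rV[R]_n) (k : nat)
  (p : R^o * 'rV[R]_n * 'rV[R]_n) : Prop :=
  forall I : {set 'I_n}, #|I| = k ->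
    conv (G a0 a I) (p.1.1, p.1.2, [ffun s : subI I => p.2 0 (val s)]).

(* The explicit description of conv(G_I) for I = {i,j}.  w u v is the variable
   w_{uv} of the unordered pair {u,v} (so w is required symmetric); only the
   values on pairs of E(I) are constrained/used. *)
Definition PI {R : realType} {n : nat} (a0 : R) (a : 'rV[R]_n) (i j : 'I_n)
  (rho : R) (y : 'rV[R]_n) (xI : {ffun subI [set i; j] -> R^o}) : Prop :=
  exists w : 'I_n -> 'I_n -> R,
    (forall u v, w u v = w v u) /\
    (forall u v : 'I_n, u != v -> (u \in [set i; j]) || (v \in [set i; j]) ->
       [/\ 0 <= w u v, y 0 u + y 0 v - w u v <= rho,
           w u v <= y 0 u & w u v <= y 0 v]) /\
    (forall k : 'I_n, k \notin [set i; j] ->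
       [/\ y 0 i + y 0 j + y 0 k - w i j - w j k - w i k <= rho,
           - y 0 i + w i j + w i k - w j k <= 0,
           - y 0 j + w i j - w i k + w j k <= 0 &
           - y 0 k - w i j + w i k + w j k <= 0]) /\
    (0 <= rho /\ a0 * rho + \sum_(k < n) a 0 k * y 0 k = 1) /\
    (forall s : subI [set i; j],
       xI s = (a0 + a 0 (val s)) * y 0 (val s)
              + \sum_(v < n | v != val s) a 0 v * w (val s) v).

(* Main.v *)
Require Import Defs.
From mathcomp Require Import all_boot all_order all_algebra.
From mathcomp Require Import reals ring lra.
Import Order.TTheory GRing.Theory Num.Theory.
Local Open Scope ring_scope.

Lemma conv_fin {R : numDomainType} {V : lmodType R} (T : finType) (S : V -> Prop)
  (lam : T -> R) (v : T -> V) :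
  (forall t, 0 <= lam t) -> \sum_t lam t = 1 -> (forall t, S (v t)) ->
  conv S (\sum_t lam t *: v t).
Proof.
move=> H0 H1 HS; exists #|T|, (fun k => lam (enum_val k)), (fun k => v (enum_val k)).
have E (W : zmodType) (f : T -> W) : \sum_t f t = \sum_(k < #|T|) f (enum_val k).
  exact: (big_enum_val (op := +%R) (A := T) f).
split=> //; split; first by rewrite -H1 E.
split=> //; by rewrite E.
Qed.

Lemma prod_moment (R : comNzRingType) n (F : 'I_n -> bool -> R) (U : {set 'I_n}) :
  (forall u, F u false + F u true = 1) ->
  \sum_(x : {ffun 'I_n -> bool}) (\prod_u F u (x u)) * \prod_(u in U) ((x u)%:R : R)
  = \prod_(u in U) F u true.
Proof.
move=> HF.
have E (x : {ffun 'I_n -> bool}) : (\prod_u F u (x u)) * \prod_(u in U) ((x u)%:R : R)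
   = \prod_u (F u (x u) * (if u \in U then (x u)%:R else 1)).
  by rewrite big_split /= -big_mkcond.
rewrite (eq_bigr _ (fun x _ => E x)).
rewrite -(bigA_distr_bigA (fun u c => F u c * (if u \in U then (c%:R : R) else 1))).
rewrite [RHS]big_mkcond /=; apply: eq_bigr => u _.
rewrite big_bool /=; case: (u \in U); first by rewrite mulr1 mulr0 addr0.
by rewrite !mulr1 addrC HF.
Qed.

Lemma ge_max' (R : realDomainType) (x y z : R) : (Num.max x y <= z) = (x <= z) && (y <= z).
Proof. exact: ge_max. Qed.
Lemma le_max' (R : realDomainType) (x y z : R) : (z <= Num.max x y) = (z <= x) || (z <= y).
Proof. exact: le_max. Qed.
Lemma conv_to_PI (R : realType) (n : nat) (a0 : R) (a : 'rV[R]_n) (i j : 'I_n)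
  rho (y : 'rV[R]_n) (xI : {ffun {u : 'I_n | u \in [set i; j]} -> R^o}) :
  (forall x, 0 < denom a0 a x) ->
  conv (G a0 a [set i; j]) (rho, y, xI) -> PI a0 a i j rho y xI.
Proof.
move=> Hpos [m [lam [vv [Hl [H1 [HS Hp]]]]]].
have [X HX] := fin_all_exists HS.
have Hp' : (rho, y, xI) = \sum_(k < m) lam k *: Gpt a0 a [set i; j] (X k).
  by rewrite Hp; apply: eq_bigr => k _; rewrite HX.
pose D k := denom a0 a (X k).
pose z k := lam k / D k.
have Dne k : D k != 0 by rewrite gt_eqF // Hpos.
have z0 k : 0 <= z k by rewrite divr_ge0 // ltW // Hpos.
have Hrho : rho = \sum_k z k.
  have := congr1 (fun p : R^o * 'rV[R]_n * {ffun {u : 'I_n | u \in [set i; j]} -> R^o} => p.1.1) Hp'.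
  rewrite /= => ->.
  rewrite (big_morph (fun p : R^o * 'rV[R]_n * {ffun {u : 'I_n | u \in [set i; j]} -> R^o} => p.1.1) (id1 := 0) (op1 := +%R)) //.
have Hy c : y 0 c = \sum_k z k * (X k c)%:R.
  have := congr1 (fun p : R^o * 'rV[R]_n * {ffun {u : 'I_n | u \in [set i; j]} -> R^o} => p.1.2 0 c) Hp'.
  rewrite /= => ->.
  rewrite (big_morph (fun p : R^o * 'rV[R]_n * {ffun {u : 'I_n | u \in [set i; j]} -> R^o} => p.1.2 0 c) (id1 := 0) (op1 := +%R)); last 2 first.
    by move=> p q /=; rewrite mxE.
    by rewrite mxE.
  apply: eq_bigr => k _; rewrite !mxE /z /D; ring.
have Hx s : xI s = \sum_k lam k * (X k (val s))%:R.
  have := congr1 (fun p : R^o * 'rV[R]_n * {ffun {u : 'I_n | u \in [set i; j]} -> R^o} => p.2 s) Hp'.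
  rewrite /= => ->.
  rewrite (big_morph (fun p : R^o * 'rV[R]_n * {ffun {u : 'I_n | u \in [set i; j]} -> R^o} => p.2 s) (id1 := 0) (op1 := +%R)); last 2 first.
    by move=> p q /=; rewrite ffunE.
    by rewrite ffunE.
  apply: eq_bigr => k _; rewrite !ffunE //.
pose w (u v : 'I_n) := \sum_k z k * ((X k u)%:R * (X k v)%:R).
have Hw u v : w u v = \sum_k z k * ((X k u)%:R * (X k v)%:R) by [].
exists w; split.
  by move=> u v; rewrite !Hw; apply: eq_bigr => k _; rewrite [_ * (X k u)%:R]mulrC.
split.
  move=> u v _ _; split.
  - by rewrite Hw; apply: sumr_ge0 => k _; rewrite mulr_ge0 // mulr_ge0.
  - rewrite -subr_le0 !Hy Hw Hrho -?sumrN -!big_split /=; apply: sumr_le0 => k _.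
    have := z0 k; case: (X k u); case: (X k v) => /= Hz; lra.
  - rewrite -subr_le0 !Hy Hw -?sumrN -!big_split /=; apply: sumr_le0 => k _.
    have := z0 k; case: (X k u); case: (X k v) => /= Hz; lra.
  - rewrite -subr_le0 !Hy Hw -?sumrN -!big_split /=; apply: sumr_le0 => k _.
    have := z0 k; case: (X k u); case: (X k v) => /= Hz; lra.
split.
  move=> c _; split.
  - rewrite -subr_le0 !Hy !Hw Hrho -?sumrN -!big_split /=; apply: sumr_le0 => k _.
    have := z0 k; case: (X k i); case: (X k j); case: (X k c) => /= Hz; lra.
  - rewrite !Hy !Hw -?sumrN -!big_split /=; apply: sumr_le0 => k _.
    have := z0 k; case: (X k i); case: (X k j); case: (X k c) => /= Hz; lra.
  - rewrite !Hy !Hw -?sumrN -!big_split /=; apply: sumr_le0 => k _.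
    have := z0 k; case: (X k i); case: (X k j); case: (X k c) => /= Hz; lra.
  - rewrite !Hy !Hw -?sumrN -!big_split /=; apply: sumr_le0 => k _.
    have := z0 k; case: (X k i); case: (X k j); case: (X k c) => /= Hz; lra.
have lamE k : lam k = z k * D k by rewrite /z divfK.
split; first split.
- by rewrite Hrho sumr_ge0.
- rewrite Hrho big_distrr /=.
  under [X in _ + X = _]eq_bigr do rewrite Hy big_distrr /=.
  rewrite (exchange_big) /= -big_split /= -[in RHS]H1; apply: eq_bigr => k _.
  rewrite lamE /D /denom mulrDr big_distrr /=; congr (_ + _); first by rewrite mulrC.
  by apply: eq_bigr => c _; rewrite mulrCA.
- move=> s; rewrite Hx.
  set u := \val s.
  rewrite Hy big_distrr /=.
  under [X in _ = _ + X]eq_bigr do rewrite Hw big_distrr /=.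
  rewrite (exchange_big) /= -big_split /=; apply: eq_bigr => k _.
  rewrite lamE /D /denom (bigD1 u) //=.
  case: (X k u) => /=.
  + rewrite [in RHS](eq_bigr (fun c => z k * (a 0 c * (X k c)%:R))); last by move=> c _; ring.
    rewrite -big_distrr /=; ring.
  + rewrite [in RHS]big1; last by move=> c _; ring.
    ring.
Qed.

Lemma tri_bounds (R : realDomainType) (rho yi yj yk wij wik wjk : R) :
 0 <= wij -> yi + yj - wij <= rho -> wij <= yi -> wij <= yj ->
 0 <= wik -> yi + yk - wik <= rho -> wik <= yi -> wik <= yk ->
 0 <= wjk -> yj + yk - wjk <= rho -> wjk <= yj -> wjk <= yk ->
 yi + yj + yk - wij - wjk - wik <= rho -> - yi + wij + wik - wjk <= 0 ->
 - yj + wij - wik + wjk <= 0 -> - yk - wij + wik + wjk <= 0 ->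
 let s := Num.max (Num.max 0 (wik + wij - yi)) (Num.max (wjk + wij - yj) (wik + wjk - yk)) in
 [/\ 0 <= s <= wij, 0 <= wik - s <= yi - wij, 0 <= wjk - s <= yj - wij
    & 0 <= yk - wik - wjk + s <= rho - yi - yj + wij].
Proof.
move=> h1 h2 h3 h4 h5 h6 h7 h8 h9 h10 h11 h12 h13 h14 h15 h16 s.
have s1 : 0 <= s by rewrite /s !le_max lexx.
have s2 : wik + wij - yi <= s by rewrite /s !le_max lexx !orbT.
have s3 : wjk + wij - yj <= s by rewrite /s !le_max lexx !orbT.
have s4 : wik + wjk - yk <= s by rewrite /s !le_max lexx !orbT.
have u1 : s <= wij by rewrite /s !ge_max; apply/andP; split; apply/andP; split; lra.
have u2 : s <= wik by rewrite /s !ge_max; apply/andP; split; apply/andP; split; lra.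
have u3 : s <= wjk by rewrite /s !ge_max; apply/andP; split; apply/andP; split; lra.
have u4 : s <= rho - yi - yj - yk + wij + wik + wjk.
  by rewrite /s !ge_max; apply/andP; split; apply/andP; split; lra.
clearbody s.
split; apply/andP; split; lra.
Qed.

Lemma PI_to_conv (R : realType) (n : nat) (a0 : R) (a : 'rV[R]_n) (i j : 'I_n)
  rho (y : 'rV[R]_n) (xI : {ffun {u : 'I_n | u \in [set i; j]} -> R^o}) :
  i != j -> (forall x, 0 < denom a0 a x) ->
  PI a0 a i j rho y xI -> conv (G a0 a [set i; j]) (rho, y, xI).
Proof.
move=> ij Hpos [w [Hsym [Ha [Hb [[Hr0 Hc] Hd]]]]].
have Ii v : (i \in [set i; j]) || (v \in [set i; j]) by rewrite set21.
have Ij v : (j \in [set i; j]) || (v \in [set i; j]) by rewrite set22 orTb.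
have [wij0 wijr wiji wijj] := Ha i j ij (Ii j).
have nk k : k \notin [set i; j] -> (k != i) && (k != j).
  by rewrite !inE negb_or.
pose p (c1 c2 : bool) : R := if c1 then (if c2 then w i j else y 0 i - w i j)
  else (if c2 then y 0 j - w i j else rho - y 0 i - y 0 j + w i j).
pose s k := Num.max (Num.max 0 (w i k + w i j - y 0 i))
                    (Num.max (w j k + w i j - y 0 j) (w i k + w j k - y 0 k)).
pose t k (c1 c2 : bool) : R := if c1 then (if c2 then s k else w i k - s k)
  else (if c2 then w j k - s k else y 0 k - w i k - w j k + s k).
pose q k c1 c2 := t k c1 c2 / p c1 c2.
pose F c1 c2 (u : 'I_n) (c : bool) : R := if u == i then (c == c1)%:R
  else if u == j then (c == c2)%:R else (if c then q u c1 c2 else 1 - q u c1 c2).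
pose mu (x : {ffun 'I_n -> bool}) :=
  \sum_(c1 : bool) \sum_(c2 : bool) p c1 c2 * \prod_u F c1 c2 u (x u).
have p0 c1 c2 : 0 <= p c1 c2 by case: c1; case: c2 => /=; lra.
have tp k : k \notin [set i; j] -> forall c1 c2, 0 <= t k c1 c2 <= p c1 c2.
  move=> /nk /andP [ki kj].
  have ik : i != k by rewrite eq_sym.
  have jk : j != k by rewrite eq_sym.
  have [wik0 wikr wiki wikk] := Ha i k ik (Ii k).
  have [wjk0 wjkr wjkj wjkk] := Ha j k jk (Ij k).
  have kn : k \notin [set i; j] by rewrite !inE negb_or ki kj.
  have [T1 T2 T3 T4] := Hb k kn.
  have [b1 b2 b3 b4] := @tri_bounds R rho (y 0 i) (y 0 j) (y 0 k) (w i j) (w i k) (w j k) wij0 wijr wiji wijj wik0 wikr wiki wikk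
     wjk0 wjkr wjkj wjkk T1 T2 T3 T4.
  by move=> c1 c2; case: c1; case: c2; rewrite /t /p /=.
have pq k : k \notin [set i; j] -> forall c1 c2, p c1 c2 * q k c1 c2 = t k c1 c2.
  move=> kn c1 c2; have /andP [t0 tl] := tp k kn c1 c2.
  have [pz|pn] := eqVneq (p c1 c2) 0.
    rewrite pz mul0r; move: tl; rewrite pz => tl; lra.
  by rewrite /q mulrC divfK.
have q01 k : k \notin [set i; j] -> forall c1 c2, 0 <= q k c1 c2 <= 1.
  move=> kn c1 c2; have /andP [t0 tl] := tp k kn c1 c2.
  have [pz|pn] := eqVneq (p c1 c2) 0.
    by rewrite /q pz invr0 mulr0 lexx ler01.
  have pp : 0 < p c1 c2 by rewrite lt0r pn p0.
  by rewrite /q divr_ge0 //= ler_pdivrMr // mul1r.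
have F1 c1 c2 u : F c1 c2 u false + F c1 c2 u true = 1.
  rewrite /F; case: (u == i); first by case: c1; rewrite /= ?add0r ?addr0.
  case: (u == j); first by case: c2; rewrite /= ?add0r ?addr0.
  by rewrite subrK.
have F0 c1 c2 u c : 0 <= F c1 c2 u c.
  rewrite /F; case: ifP => ui; first by rewrite ler0n.
  case: ifP => uj; first by rewrite ler0n.
  have kn : u \notin [set i; j] by rewrite !inE ui uj.
  have /andP [qa qb] := q01 u kn c1 c2.
  by case: c => //; rewrite subr_ge0.
have mu0 x : 0 <= mu x.
  by apply: sumr_ge0 => c1 _; apply: sumr_ge0 => c2 _; rewrite mulr_ge0 // prodr_ge0.
have Mom (U : {set 'I_n}) : \sum_x mu x * \prod_(u in U) ((x u)%:R : R)
    = \sum_(c1 : bool) \sum_(c2 : bool) p c1 c2 * \prod_(u in U) F c1 c2 u true.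
  rewrite (eq_bigr (fun x : {ffun 'I_n -> bool} => \sum_(c1 : bool) \sum_(c2 : bool) p c1 c2 *
      ((\prod_u F c1 c2 u (x u)) * \prod_(u in U) ((x u)%:R : R)))); last first.
    move=> x _; rewrite /mu big_distrl; apply: eq_bigr => c1 _.
    by rewrite big_distrl; apply: eq_bigr => c2 _; rewrite mulrA.
  rewrite exchange_big; apply: eq_bigr => c1 _; rewrite exchange_big.
  apply: eq_bigr => c2 _; rewrite -big_distrr /=; congr (_ * _); apply: prod_moment => u; exact: F1.
have Fi c1 c2 : F c1 c2 i true = c1%:R by rewrite /F eqxx; case: c1.
have Fj c1 c2 : F c1 c2 j true = c2%:R by rewrite /F eq_sym (negbTE ij) eqxx; case: c2.
have Fk c1 c2 k : k \notin [set i; j] -> F c1 c2 k true = q k c1 c2.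
  by move=> /nk /andP [ki kj]; rewrite /F (negbTE ki) (negbTE kj).
have M0 : \sum_x mu x = rho.
  transitivity (\sum_x mu x * \prod_(u in set0) ((x u)%:R : R)).
    by apply: eq_bigr => x _; rewrite big_set0 mulr1.
  by rewrite Mom !big_bool /= !big_set0 /p; ring.
have M1 c : \sum_x mu x * (x c)%:R = y 0 c.
  transitivity (\sum_x mu x * \prod_(u in [set c]) ((x u)%:R : R)).
    by apply: eq_bigr => x _; rewrite big_set1.
  rewrite Mom !big_bool !big_set1.
  have [->|ci] := eqVneq c i; first by rewrite !Fi /p /=; ring.
  have [->|cj] := eqVneq c j; first by rewrite !Fj /p /=; ring.
  have kn : c \notin [set i; j] by rewrite !inE negb_or ci cj.
  by rewrite !Fk // !pq // /t /=; ring.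
have M2 u v : u \in [set i; j] -> v != u ->
    \sum_x mu x * ((x u)%:R * (x v)%:R) = w u v.
  move=> Hu vu.
  transitivity (\sum_x mu x * \prod_(t in [set u; v]) ((x t)%:R : R)).
    by apply: eq_bigr => x _; rewrite big_setU1 ?big_set1 // inE eq_sym.
  rewrite Mom !big_bool !big_setU1 ?inE 1?eq_sym // !big_set1.
  case/set2P: Hu vu => -> vu.
  - have [->|vj] := eqVneq v j; first by rewrite !Fi !Fj /p /=; ring.
    have kn : v \notin [set i; j].
      by rewrite !inE negb_or vj vu.
    have e1 := pq v kn true true; have e2 := pq v kn true false.
    have e3 := pq v kn false true; have e4 := pq v kn false false.
    rewrite /= in e1 e2 e3 e4.
    rewrite /= !Fi !Fk //= ?mulr1n ?mulr0n ?mul1r ?mul0r ?mulr0.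
    by rewrite e1 e2; ring.
  - have [->|vi] := eqVneq v i.
      by rewrite !Fi !Fj /p /= Hsym; ring.
    have kn : v \notin [set i; j].
      by rewrite !inE negb_or vi vu.
    have e1 := pq v kn true true; have e2 := pq v kn true false.
    have e3 := pq v kn false true; have e4 := pq v kn false false.
    rewrite /= in e1 e2 e3 e4.
    rewrite /= !Fj !Fk //= ?mulr1n ?mulr0n ?mul1r ?mul0r ?mulr0.
    by rewrite e1 e3; ring.
pose D (x : {ffun 'I_n -> bool}) := denom a0 a x.
have Dne x : D x != 0 by rewrite gt_eqF // Hpos.
have key (P : R^o * 'rV[R]_n * {ffun {u : 'I_n | u \in [set i; j]} -> R^o}) :
  P.1.1 = rho -> P.1.2 = y -> P.2 = xI -> (rho, y, xI) = P.
  by case: P => [[? ?] ?] /= -> -> ->.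
have PE : (rho, y, xI) = \sum_x (mu x * D x) *: Gpt a0 a [set i; j] x.
  apply: key.
  - rewrite (big_morph (fun p : R^o * 'rV[R]_n * {ffun {u : 'I_n | u \in [set i; j]} -> R^o} => p.1.1) (id1 := 0) (op1 := +%R)) //.
    rewrite -M0; apply: eq_bigr => x _.
    rewrite /Gpt /=; change ((mu x * D x) * (D x)^-1 = mu x); exact: mulfK.
  - apply/matrixP => r c; rewrite (ord1 r).
    rewrite (big_morph (fun p : R^o * 'rV[R]_n * {ffun {u : 'I_n | u \in [set i; j]} -> R^o} => p.1.2 0 c) (id1 := 0) (op1 := +%R)); last 2 first.
      by move=> p1 p2 /=; rewrite mxE.
      by rewrite mxE.
    rewrite -M1; apply: eq_bigr => x _.
    by rewrite /Gpt /= !mxE (mulrC (_%:R)) mulrA mulfK.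
  - apply/ffunP => s0.
    rewrite (big_morph (fun p : R^o * 'rV[R]_n * {ffun {u : 'I_n | u \in [set i; j]} -> R^o} => p.2 s0) (id1 := 0) (op1 := +%R)); last 2 first.
      by move=> p1 p2 /=; rewrite ffunE.
      by rewrite ffunE.
    have Hu : val s0 \in [set i; j] := valP s0.
    rewrite Hd; move: Hu; set u := val s0 => Hu.
    rewrite -M1.
    under [X in _ = _ + X]eq_bigr => v hv do rewrite -(M2 u v Hu hv).
    rewrite big_distrr /=.
    under [X in _ = _ + X]eq_bigr do rewrite big_distrr /=.
    rewrite exchange_big /= -big_split /=; apply: eq_bigr => x _.
    rewrite /Gpt /= !ffunE.
    change ((mu x * D x) * (x u)%:R = (a0 + a 0 u) * (mu x * (x u)%:R) +
      \sum_(v < n | v != u) a 0 v * (mu x * ((x u)%:R * (x v)%:R))).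
    rewrite /D /denom (bigD1 u) //=.
    case: (x u) => /=.
    + rewrite [in RHS](eq_bigr (fun c => mu x * (a 0 c * (x c)%:R))); last by move=> c _; ring.
      rewrite -big_distrr /=; ring.
    + rewrite [in RHS]big1; last by move=> c _; ring.
      ring.
have lam0 x : 0 <= mu x * D x by rewrite mulr_ge0 // ltW // Hpos.
rewrite PE; apply: conv_fin => //; last by move=> x; exists x.
rewrite -Hc -M0 big_distrr /=.
under [X in _ = _ + X]eq_bigr do rewrite -M1 big_distrr /=.
rewrite exchange_big /= -big_split /=; apply: eq_bigr => x _.
rewrite /D /denom mulrDr big_distrr /=; congr (_ + _); first by rewrite mulrC.
by apply: eq_bigr => c _; rewrite mulrCA.
Qed.

Theorem corollary1 (R : realType) (n : nat) (a0 : R) (a : 'rV[R]_n) :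
  (3 <= n)%N ->
  (forall x : {ffun 'I_n -> bool}, 0 < denom a0 a x) ->
  (forall i j : 'I_n, i != j ->
     forall (rho : R) (y : 'rV[R]_n) (xI : {ffun {u : 'I_n | u \in [set i; j]} -> R^o}),
       conv (G a0 a [set i; j]) (rho, y, xI) <-> PI a0 a i j rho y xI) /\
  (forall p : R^o * 'rV[R]_n * 'rV[R]_n,
     relax_k a0 a 2 p <->
     (forall i j : 'I_n, i != j ->
        PI a0 a i j p.1.1 p.1.2 [ffun s : {u : 'I_n | u \in [set i; j]} => p.2 0 (val s)])).
Proof.
move=> _ Hpos.
have P1 : forall i j : 'I_n, i != j ->
     forall (rho : R) (y : 'rV[R]_n) (xI : {ffun {u : 'I_n | u \in [set i; j]} -> R^o}),
       conv (G a0 a [set i; j]) (rho, y, xI) <-> PI a0 a i j rho y xI.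
  move=> i j ij rho y xI; split; first exact: conv_to_PI.
  exact: PI_to_conv.
split => //.
move=> p; split.
- move=> Hr i j ij; apply/(P1 _ _ ij); apply: Hr.
  by rewrite cards2 ij.
- move=> H I /eqP /cards2P [u [v [uv EI]]]; subst I.
  by apply/(P1 _ _ uv); apply: H.
Qed.
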